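(* Let $(X,(\cdot,\cdot))$ be a real finite-dimensional Hilbert space, let $\delta>0$, and let $L,G\in\mathfrak{L}_+(X)$ satisfy $\min\big(d_\sigma(L^{-1},G),\,d_\sigma(L,G^{-1})\big)\leqslant\delta$. Then the spectral radius of $I-LG$ satisfies $$\rho(I-LG)\leqslant\frac{e^\delta-1}{\delta}\,\min\big(d_\sigma(L^{-1},G),\,d_\sigma(L,G^{-1})\big).$$
   Context: $\mathfrak{L}_+(X)=\{T\in\mathfrak{L}(X):(Tu,u)>0\ \forall u\in X\setminus\{0\}\}$ (operators with positive definite symmetric part). For $S,T\in\mathfrak{L}_+(X)$, $W(S,T)=\{(S_{\mathbb C}w,w)/(T_{\mathbb C}w,w): w\in X^{\mathbb C}\setminus\{0\}\}$, where $X^{\mathbb C}$ is the complexification of $X$ and $T_{\mathbb C}(u+\mathbf{i}v)=Tu+\mathbf{i}Tv$; the spectral distance is $d_\sigma(S,T)=\sup\{|\ln z|: z\in W(S,T)\}$ with $\ln$ the principal branch on $\mathbb{C}\setminus(-\infty,0]$. *)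

(* Defs.v *)
From HB Require Import structures.
From mathcomp Require Import all_boot all_order all_algebra.
From mathcomp Require Import all_classical all_reals all_analysis.
Set Implicit Arguments. Unset Strict Implicit. Unset Printing Implicit Defensive.
Import Order.TTheory GRing.Theory Num.Theory.
Local Open Scope ring_scope.
Local Open Scope classical_set_scope.

Section Defs.
Variables (R : realType) (n : nat).

(* X = R^n (column vectors) with a general inner product (u,v) = u^T Q v,
   Q symmetric positive definite; operators are n x n matrices acting by T *m u. *)
Definition ip (Q : 'M[R]_n) (u v : 'cV[R]_n) : R := (u^T *m Q *m v) 0 0.

Definition is_inner_product (Q : 'M[R]_n) : Prop :=
  Q^T = Q /\ forall u : 'cV[R]_n, u != 0 -> 0 < ip Q u u.

Definition Lplus (Q : 'M[R]_n) (T : 'M[R]_n) : Prop :=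
  forall u : 'cV[R]_n, u != 0 -> 0 < ip Q (T *m u) u.

(* complex numbers as pairs (re, im) *)
Definition cdiv (z w : R * R) : R * R :=
  let: (a, b) := z in let: (c, d) := w in
  ((a * c + b * d) / (c ^+ 2 + d ^+ 2), (b * c - a * d) / (c ^+ 2 + d ^+ 2)).
Definition cabs (z : R * R) : R := Num.sqrt (z.1 ^+ 2 + z.2 ^+ 2).
(* principal argument, valid on C \ (-oo,0] *)
Definition carg (z : R * R) : R := 2 * atan (z.2 / (cabs z + z.1)).
Definition cLn (z : R * R) : R * R := (ln (cabs z), carg z).
Definition absLn (z : R * R) : R := cabs (cLn z).

(* (T_C w, w) for w = u + i v, complexified inner product
   (x1 + i y1, x2 + i y2) = (x1,x2) + (y1,y2) + i((y1,x2) - (x1,y2)) *)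
Definition qfC (Q T : 'M[R]_n) (u v : 'cV[R]_n) : R * R :=
  (ip Q (T *m u) u + ip Q (T *m v) v, ip Q (T *m v) u - ip Q (T *m u) v).

Definition Wset (Q S T : 'M[R]_n) : set (R * R) :=
  [set z | exists u v : 'cV[R]_n, (u != 0 \/ v != 0) /\ z = cdiv (qfC Q S u v) (qfC Q T u v)].

Definition dsigma (Q S T : 'M[R]_n) : R := sup [set absLn z | z in Wset Q S T].

(* complex eigenvalues a + i b of A (acting on the complexification) *)
Definition ceigen (A : 'M[R]_n) (z : R * R) : Prop :=
  exists x y : 'cV[R]_n, (x != 0 \/ y != 0) /\
    A *m x = z.1 *: x - z.2 *: y /\ A *m y = z.2 *: x + z.1 *: y.

Definition specrad (A : 'M[R]_n) : R := sup [set cabs z | z in ceigen A].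

End Defs.

(* Main.v *)
Require Import Defs.
From HB Require Import structures.
From mathcomp Require Import all_boot all_order all_algebra.
From mathcomp Require Import all_classical all_reals all_analysis.
From mathcomp Require Import ring lra.
Import Order.TTheory GRing.Theory Num.Theory.
Import numFieldNormedType.Exports.
Local Open Scope ring_scope.
Local Open Scope classical_set_scope.
Set Implicit Arguments. Unset Strict Implicit.



Section Coer.
Variable R : realType.

Lemma cont_sum (T : topologicalType) m (F : 'I_m -> T -> R^o) :
  (forall i, continuous (F i)) -> continuous (fun x => \sum_(i < m) F i x).
Proof.
elim: m F => [|m IH] F hF.
  have -> : (fun x => \sum_(i < 0) F i x) = (fun=> 0) by apply: funext => x; rewrite big_ord0.
  exact: cst_continuous.
have -> : (fun x => \sum_(i < m.+1) F i x) =
   (fun x => \sum_(i < m) F (widen_ord (leqnSn m) i) x) \+ F ord_max.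
  by apply: funext => x; rewrite big_ord_recr.
move=> x; apply: continuousD; last exact: hF.
by apply: IH => i; exact: hF.
Qed.

Definition qf n (P : 'M[R]_n) (r : 'rV[R]_n) : R := (r *m P *m r^T) 0 0.

Lemma qfE n (P : 'M[R]_n) r : qf P r = \sum_j (\sum_i r 0 i * P i j) * r 0 j.
Proof. by rewrite /qf mxE; apply: eq_bigr => j _; rewrite !mxE. Qed.

Lemma qf_cont n (P : 'M[R]_n) : continuous (qf P).
Proof.
have -> : qf P = (fun r => \sum_j (\sum_i r 0 i * P i j) * r 0 j).
  by apply: funext => r; rewrite qfE.
apply: cont_sum => j x; apply: continuousM; last exact: coord_continuous.
move: x; apply: cont_sum => i x; apply: continuousM; first exact: coord_continuous.
exact: cst_continuous.
Qed.

Lemma qfZ n (P : 'M[R]_n) a r : qf P (a *: r) = a ^+ 2 * qf P r.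
Proof.
rewrite !qfE mulr_sumr; apply: eq_bigr => j _; rewrite !mxE.
have -> : \sum_i (a *: r) 0 i * P i j = a * \sum_i r 0 i * P i j.
  by rewrite mulr_sumr; apply: eq_bigr => i _; rewrite mxE mulrA.
ring.
Qed.

Lemma coercive n (P : 'M[R]_n) : (forall r, r != 0 -> 0 < qf P r) ->
  exists2 c, 0 < c & forall r, c * `|r| ^+ 2 <= qf P r.
Proof.
move=> Ppos.
case: n P Ppos => [|n] P Ppos.
  exists 1 => // r; rewrite (thinmx0 r) normr0 expr0n /= mulr0 /qf !mxE big_ord0 //.
set A := [set r : 'rV[R]_n.+1 | `|r| = 1].
have A0 : A !=set0.
  have e0 : (const_mx 1 : 'rV[R]_n.+1) != 0.
    by apply/eqP => /matrixP/(_ 0 0); rewrite !mxE => /eqP; rewrite oner_eq0.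
  exists (`|const_mx 1 : 'rV[R]_n.+1|^-1 *: const_mx 1).
  by rewrite /A /= normrZ normrV ?unitfE ?normr_eq0 // normr_id mulVf // normr_eq0.
have cA : compact A.
  apply: bounded_closed_compact.
    exists 1; split; first exact: num_real.
    by move=> x x1 r /= ->; exact: ltW.
  rewrite /A.
  have -> : [set r : 'rV[R]_n.+1 | `|r| = 1] = (@Num.norm _ _) @^-1` [set x | x = 1] by [].
  by apply: preimage_closed; [move=> x _; exact: norm_continuous | exact: closed_eq].
have [c cinA cmin] := compact_EVT_min A0 cA (continuous_subspaceT (@qf_cont _ P)).
have c0 : c != 0.
  by apply/eqP => c0; move: cinA; rewrite inE /A /= c0 normr0 => /esym/eqP; rewrite oner_eq0.
exists (qf P c); first exact: Ppos.
move=> r; have [->|r0] := eqVneq r 0.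
  by rewrite normr0 expr0n /= mulr0 /qf !mul0mx mxE.
have nr0 : `|r| != 0 by rewrite normr_eq0.
have hs : `|(`|r|^-1 *: r)| = 1 by rewrite normrZ normrV ?unitfE // normr_id mulVf.
have -> : qf P r = `|r| ^+ 2 * qf P (`|r|^-1 *: r).
  by rewrite -qfZ scalerA mulfV // scale1r.
rewrite mulrC ler_wpM2l ?exprn_ge0 //.
by apply: cmin; rewrite inE.
Qed.

End Coer.



Section An.
Variable R : realType.

Lemma sin_le_pos (y : R) : 0 < y -> `|sin y| <= y.
Proof.
move=> y0.
have [c _ /=] := @MVT R sin cos 0 y y0 (fun x _ => is_derive_sin x)
   (continuous_subspaceT (@continuous_sin R)).
rewrite sin0 subr0 subr0 => ->.
by rewrite normrM (gtr0_norm y0) ler_piMl ?cos_max ?ltW.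
Qed.

Lemma abs_sin_le (x : R) : `|sin x| <= `|x|.
Proof.
have [x0|x0|->] := ltgtP x 0; last by rewrite sin0 normr0.
  rewrite -normrN -sinN -(normrN x) [X in _ <= X]gtr0_norm ?oppr_gt0 //.
  by apply: sin_le_pos; rewrite oppr_gt0.
by rewrite (gtr0_norm x0); exact: sin_le_pos.
Qed.

Lemma one_sub_cos (t : R) : 1 - cos t <= t ^+ 2 / 2.
Proof.
have -> : t = t / 2 + t / 2 by rewrite -splitr.
rewrite cosD.
have h := abs_sin_le (t / 2).
move: h; rewrite !ler_norml => /andP[h1 h2].
have e := cos2Dsin2 (t / 2).
set s := sin (t / 2) in h1 h2 e *; set c := cos (t/2) in e *.
have hh : s ^+ 2 <= `|t / 2| ^+ 2.
  rewrite -ler_sqrt ?exprn_ge0 // !sqrtr_sqr.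
  by rewrite normr_id ler_norml h1 h2.
have ht : `|t / 2| ^+ 2 = (t/2) ^+ 2 by rewrite real_normK // num_real.
rewrite ht in hh.
have -> : (t / 2 + t / 2) ^+ 2 / 2 = 2 * (t / 2) ^+ 2 by field.
nra.
Qed.

Lemma ln_abs_le (x : R) : 0 < x -> `|ln x| <= x + x^-1.
Proof.
move=> x0.
have h1 : 1 + ln x <= x by have := expR_ge1Dx (ln x); rewrite lnK // posrE.
have h2 : 1 + ln (x^-1) <= x^-1.
  by have := expR_ge1Dx (ln x^-1); rewrite lnK // posrE invr_gt0.
rewrite lnV ?posrE // in h2.
have xi0 : 0 < x^-1 by rewrite invr_gt0.
rewrite ler_norml; apply/andP; split; lra.
Qed.

Lemma sqrt_le_add (a b : R) : Num.sqrt (a ^+ 2 + b ^+ 2) <= `|a| + `|b|.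
Proof.
rewrite -(ger0_norm (addr_ge0 (normr_ge0 a) (normr_ge0 b))) -sqrtr_sqr ler_sqrt ?exprn_ge0 //.
rewrite -(real_normK (num_real a)) -(real_normK (num_real b)).
have := normr_ge0 a; have := normr_ge0 b; nra.
Qed.

Lemma exp_key (s t : R) :
  (expR s - 1) ^+ 2 + expR s * t ^+ 2 <= (expR (Num.sqrt (s ^+ 2 + t ^+ 2)) - 1) ^+ 2.
Proof.
set rho := Num.sqrt _.
have rho0 : 0 <= rho by exact: sqrtr_ge0.
have rho2 : rho ^+ 2 = s ^+ 2 + t ^+ 2 by rewrite sqr_sqrtr // addr_ge0 // sqr_ge0.
have A1 := expR_ge1Dx s.
have A0 := expR_gt0 s.
have E1 := expR_ge1Dx rho.
have rs : s <= rho by nra.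
have rs' : - s <= rho by nra.
have [s0|s0] := leP 0 s.
  have Ege : expR s * (1 + (rho - s)) <= expR rho.
    have -> : rho = s + (rho - s) by ring.
    rewrite expRD ler_wpM2l ?(ltW A0) //.
    by rewrite (_ : s + (rho - s) - s = rho - s); [exact: expR_ge1Dx | ring].
  set A := expR s in A1 A0 Ege *.
  set E := expR rho in E1 Ege *.
  have h1 : 0 <= (A - 1) + A * (rho - s) by nra.
  have h2 : ((A - 1) + A * (rho - s)) ^+ 2 <= (E - 1) ^+ 2.
    have hp : (A - 1) + A * (rho - s) <= E - 1 by nra.
    nra.
  have h3 : (A - 1) ^+ 2 + A * t ^+ 2 <= ((A - 1) + A * (rho - s)) ^+ 2.
    have -> : t ^+ 2 = (rho - s) * (rho + s) by nra.
    have h4 : 0 <= 2 * (A - 1) + A * (rho - s) - (rho + s) by nra.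
    have h5 : 0 <= A * (rho - s) by nra.
    nra.
  lra.
set A := expR s in A1 A0 *.
set E := expR rho in E1 *.
have As : A <= 1 by rewrite /A -expR0 ler_expR ltW.
have h1 : (A - 1) ^+ 2 <= s ^+ 2 by nra.
have h2 : A * t ^+ 2 <= t ^+ 2 by have := sqr_ge0 t; nra.
have h3 : rho ^+ 2 <= (E - 1) ^+ 2 by nra.
lra.
Qed.

Lemma conv_bound (r d : R) : 0 <= r -> r <= d -> 0 < d ->
  expR r - 1 <= r / d * (expR d - 1).
Proof.
move=> r0 rd d0.
have t0 : 0 <= r / d by rewrite divr_ge0 // ltW.
have t1 : r / d <= 1 by rewrite ler_pdivrMr // mul1r.
have := convex_expR (Itv01 t0 t1) d 0.
rewrite !convRE /= mulr0 addr0 expR0 mulr1 divfK ?gt_eqF //.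
rewrite /unstable.onem; lra.
Qed.

End An.



Section Cx.
Variable R : realType.
Implicit Types z w : R * R.

Lemma cabs_ge0 z : 0 <= cabs z.
Proof. exact: sqrtr_ge0. Qed.

Lemma cabs_sqr z : cabs z ^+ 2 = z.1 ^+ 2 + z.2 ^+ 2.
Proof. by rewrite sqr_sqrtr // addr_ge0 // sqr_ge0. Qed.

Lemma cabs_ge1 z : z.1 <= cabs z.
Proof.
have := cabs_sqr z; have := cabs_ge0 z; have := sqr_ge0 z.2; nra.
Qed.

Lemma cabs_le z : cabs z <= `|z.1| + `|z.2|.
Proof. exact: sqrt_le_add. Qed.

Lemma cabs_cdiv z w : 0 < w.1 -> cabs (cdiv z w) = cabs z / cabs w.
Proof.
case: z => a b; case: w => c d /= c0.
have m0 : 0 < c ^+ 2 + d ^+ 2 by have := sqr_ge0 d; nra.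
rewrite /cabs /cdiv /=.
have -> : ((a * c + b * d) / (c ^+ 2 + d ^+ 2)) ^+ 2 + ((b * c - a * d) / (c ^+ 2 + d ^+ 2)) ^+ 2
   = (a ^+ 2 + b ^+ 2) * (c ^+ 2 + d ^+ 2)^-1.
  by field; rewrite gt_eqF.
by rewrite sqrtrM ?addr_ge0 ?sqr_ge0 // sqrtrV // ltW.
Qed.

Lemma polar (X Y : R) : 0 < cabs (X, Y) + X ->
  X = cabs (X, Y) * cos (carg (X, Y)) /\ Y = cabs (X, Y) * sin (carg (X, Y)).
Proof.
move=> hp.
have r2 := cabs_sqr (X, Y); rewrite /= in r2.
have r0 := cabs_ge0 (X, Y).
rewrite /carg /=.
set r := cabs (X, Y) in hp r2 r0 *.
have rp : 0 < r.
  rewrite lt_neqAle r0 andbT; apply/eqP => r0'.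
  rewrite -r0' in r2 hp; have := sqr_ge0 Y; nra.
set u := Y / (r + X).
have rX0 : r + X != 0 by rewrite gt_eqF.
have hu : 1 + u ^+ 2 = 2 * r / (r + X).
  rewrite /u.
  have -> : 1 + (Y / (r + X)) ^+ 2 = ((r + X) ^+ 2 + Y ^+ 2) / (r + X) ^+ 2 by field.
  have -> : (r + X) ^+ 2 + Y ^+ 2 = 2 * r * (r + X) by nra.
  by field.
have hc : cos (atan u) ^+ 2 = (1 + u ^+ 2)^-1.
  by rewrite cos_atan exprVn sqr_sqrtr // addr_ge0 // sqr_ge0.
have cne : cos (atan u) != 0.
  by apply/eqP => h; move: hc; rewrite h expr0n /= => /esym/eqP; rewrite invr_eq0 gt_eqF // ltr_pwDl // sqr_ge0.
have hs : sin (atan u) = u * cos (atan u).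
  by have := atanK u; rewrite /tan => {2}<-; rewrite divfK.
rewrite mulr_natl cos_mulr2n sin_mulr2n hs.
have -> : cos (atan u) * (u * cos (atan u)) = u * cos (atan u) ^+ 2 by ring.
rewrite hc hu !mulr2n.
have e1 : r * ((2 * r / (r + X))^-1 + (2 * r / (r + X))^-1 - 1) = X by field; rewrite ?gt_eqF.
have e2 : r * (u * (2 * r / (r + X))^-1 + u * (2 * r / (r + X))^-1) = Y.
  by rewrite /u; field; rewrite ?gt_eqF.
by rewrite e1 e2.
Qed.


Lemma cabs_pos (X Y : R) : 0 < cabs (X, Y) + X -> 0 < cabs (X, Y).
Proof.
move=> hp; have r2 := cabs_sqr (X, Y); have r0 := cabs_ge0 (X, Y); rewrite /= in r2.
rewrite lt_neqAle r0 andbT; apply/eqP => r0'.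
rewrite -r0' in r2 hp; have := sqr_ge0 Y; nra.
Qed.

Lemma key_est (a b : R) : 0 < cabs (1 - a, - b) + (1 - a) ->
  cabs (a, b) <= expR (absLn (1 - a, - b)) - 1.
Proof.
move=> hp.
have [hX hY] := polar hp.
have rp := cabs_pos hp.
set r := cabs (1 - a, - b) in hX hY rp hp.
set t := carg (1 - a, - b) in hX hY.
have -> : absLn (1 - a, - b) = Num.sqrt (ln r ^+ 2 + t ^+ 2) by [].
have := exp_key (ln r) t.
rewrite lnK ?posrE //.
set E := expR _.
move=> hk.
have E1 : 1 <= E by rewrite /E -expR0 ler_expR sqrtr_ge0.
have hc := one_sub_cos t.
have e : cabs (a, b) ^+ 2 = (r - 1) ^+ 2 + 2 * r * (1 - cos t).
  rewrite cabs_sqr /=.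
  have ea : a = 1 - r * cos t by rewrite -hX; ring.
  have eb : b = - (r * sin t) by rewrite -hY; ring.
  rewrite ea eb.
  have := cos2Dsin2 t; nra.
have h : cabs (a, b) ^+ 2 <= (E - 1) ^+ 2 by nra.
have c0 := cabs_ge0 (a, b).
nra.
Qed.

Lemma absLn_inv (X Y : R) : 0 < cabs (X, Y) + X ->
  absLn (X / (X ^+ 2 + Y ^+ 2), - Y / (X ^+ 2 + Y ^+ 2)) = absLn (X, Y).
Proof.
move=> hp.
have rp := cabs_pos hp.
have r2 := cabs_sqr (X, Y); rewrite /= in r2.
set r := cabs (X, Y) in rp r2 hp *.
have m0 : X ^+ 2 + Y ^+ 2 != 0 by rewrite -r2 expf_neq0 // gt_eqF.
have cm : cabs (X / (X ^+ 2 + Y ^+ 2), - Y / (X ^+ 2 + Y ^+ 2)) = r^-1.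
  rewrite /cabs /=.
  have -> : (X / (X ^+ 2 + Y ^+ 2)) ^+ 2 + (- Y / (X ^+ 2 + Y ^+ 2)) ^+ 2 = (r ^+ 2)^-1.
    by rewrite r2; field.
  by rewrite sqrtrV ?sqr_ge0 // sqrtr_sqr gtr0_norm.
rewrite /absLn /cLn /carg cm /=.
have -> : - Y / (X ^+ 2 + Y ^+ 2) / (r^-1 + X / (X ^+ 2 + Y ^+ 2)) = - (Y / (r + X)).
  by rewrite -r2; field; rewrite !gt_eqF.
rewrite -/r atanN lnV ?posrE // mulrN /cabs /= !sqrrN.
by [].
Qed.

End Cx.



Section D.
Variable R : realType.

Lemma entry_le m n (M : 'M[R]_(m, n)) i j : `|M i j| <= `|M|.
Proof.
rewrite [leRHS]/Num.Def.normr /= mx_normrE.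
by apply/bigmax_geP; right; exists (i, j).
Qed.

Lemma bilE n (P : 'M[R]_n) (r1 r2 : 'rV[R]_n) :
  (r1 *m P *m r2^T) 0 0 = \sum_j (\sum_i r1 0 i * P i j) * r2 0 j.
Proof. by rewrite mxE; apply: eq_bigr => j _; rewrite !mxE. Qed.

Lemma bil_bound n (P : 'M[R]_n) : exists2 K, 0 <= K &
  forall r1 r2 : 'rV[R]_n, `|(r1 *m P *m r2^T) 0 0| <= K * (`|r1| * `|r2|).
Proof.
exists (\sum_j \sum_i `|P i j|); first by apply: sumr_ge0 => j _; apply: sumr_ge0.
move=> r1 r2; rewrite bilE.
apply: le_trans (ler_norm_sum _ _ _) _.
rewrite mulr_suml; apply: ler_sum => j _; rewrite normrM.
have h1 : `|\sum_i r1 0 i * P i j| <= (\sum_i `|P i j|) * `|r1|.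
  apply: le_trans (ler_norm_sum _ _ _) _.
  rewrite mulr_suml; apply: ler_sum => i _; rewrite normrM mulrC.
  by apply: ler_wpM2l => //; exact: entry_le.
rewrite mulrA; apply: ler_pM => //; exact: entry_le.
Qed.


Variable n : nat.
Implicit Types (Q A B S T : 'M[R]_n) (x y u v : 'cV[R]_n).

Lemma ipDl Q x y u : ip Q (x + y) u = ip Q x u + ip Q y u.
Proof. by rewrite /ip linearD /= !mulmxDl mxE. Qed.

Lemma ipZl Q a x u : ip Q (a *: x) u = a * ip Q x u.
Proof. by rewrite /ip linearZ /= -!scalemxAl mxE. Qed.

Lemma ipNl Q x u : ip Q (- x) u = - ip Q x u.
Proof. by rewrite -scaleN1r ipZl mulN1r. Qed.

Lemma ip0l Q u : ip Q 0 u = 0.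
Proof. by rewrite /ip linear0 !mul0mx mxE. Qed.

Lemma ipC Q x y : Q^T = Q -> ip Q x y = ip Q y x.
Proof.
move=> hQ; rewrite /ip.
have -> : (x^T *m Q *m y) 0 0 = ((x^T *m Q *m y)^T) 0 0 by rewrite [RHS]mxE.
by rewrite !trmx_mul trmxK hQ mulmxA.
Qed.

Lemma ip_qf Q A u v : ip Q (A *m u) v = (u^T *m (A^T *m Q) *m (v^T)^T) 0 0.
Proof. by rewrite /ip trmxK trmx_mul !mulmxA. Qed.

Lemma qfC_rel Q A B x y X Y :
  A *m x = X *: (B *m x) - Y *: (B *m y) ->
  A *m y = Y *: (B *m x) + X *: (B *m y) ->
  qfC Q A x y = (X * (qfC Q B x y).1 - Y * (qfC Q B x y).2,
                 Y * (qfC Q B x y).1 + X * (qfC Q B x y).2).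
Proof.
move=> hx hy; rewrite /qfC /= hx hy !ipDl !ipNl !ipZl.
congr (_, _); ring.
Qed.

End D.

Section E.
Variable R : realType.

Lemma cdiv_mulL (X Y N1 N2 : R) : 0 < N1 ->
  cdiv (X * N1 - Y * N2, Y * N1 + X * N2) (N1, N2) = (X, Y).
Proof.
move=> h; have m0 : N1 ^+ 2 + N2 ^+ 2 != 0 by rewrite gt_eqF //; have := sqr_ge0 N2; nra.
rewrite /cdiv; congr (_, _); field => //.
Qed.

Lemma cdiv_mulR (X Y N1 N2 : R) : 0 < N1 -> X ^+ 2 + Y ^+ 2 != 0 ->
  cdiv (N1, N2) (X * N1 - Y * N2, Y * N1 + X * N2) =
  (X / (X ^+ 2 + Y ^+ 2), - Y / (X ^+ 2 + Y ^+ 2)).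
Proof.
move=> h m1; have m0 : N1 ^+ 2 + N2 ^+ 2 != 0 by rewrite gt_eqF //; have := sqr_ge0 N2; nra.
have e : (X * N1 - Y * N2) ^+ 2 + (Y * N1 + X * N2) ^+ 2 = (X ^+ 2 + Y ^+ 2) * (N1 ^+ 2 + N2 ^+ 2) by ring.
rewrite /cdiv e; congr (_, _); field; by rewrite m0 m1.
Qed.

Lemma lam_ok (X Y N1 N2 : R) : 0 < N1 -> 0 < X * N1 - Y * N2 -> 0 < cabs (X, Y) + X.
Proof.
move=> h1 h2.
have r2 := cabs_sqr (X, Y); have r0 := cabs_ge0 (X, Y); rewrite /= in r2.
set r := cabs (X, Y) in r2 r0 *.
have [Y0|Y0] := eqVneq Y 0.
  rewrite Y0 mul0r subr0 in h2.
  have X0 : 0 < X by rewrite -(pmulr_lgt0 _ h1).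
  have := cabs_ge1 (X, Y); rewrite /= -/r; lra.
have Y2 : 0 < Y ^+ 2 by rewrite exprn_even_gt0 //.
rewrite ltNge; apply/negP => h.
have h3 : r <= - X by lra.
have h4 : 0 <= - X by lra.
nra.
Qed.

End E.



Section F.
Variable R : realType.

Lemma div_le (p q c d : R) : 0 < c -> 0 < d -> p * c <= q * d -> p / d <= q / c.
Proof.
move=> c0 d0 h.
have -> : p / d = (p * c) / (c * d) by field; rewrite !gt_eqF.
have -> : q / c = (q * d) / (c * d) by field; rewrite !gt_eqF.
by rewrite ler_pM2r // invr_gt0 mulr_gt0.
Qed.

Lemma carg_bound (w : R * R) : `|carg w| <= pi.
Proof.
rewrite /carg; set q := _ / _.
have h1 := atan_gtNpi2 q; have h2 := atan_ltpi2 q.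
rewrite ler_norml; apply/andP; split; lra.
Qed.

Variable n : nat.
Implicit Types (Q A B S T : 'M[R]_n) (x y u v : 'cV[R]_n).

Lemma trmx_neq0 m k (M : 'M[R]_(m, k)) : M != 0 -> M^T != 0.
Proof. by move=> h; apply/eqP => h'; move: h; rewrite -(trmxK M) h' trmx0 eqxx. Qed.

Lemma Lplus_coer Q T : Lplus Q T ->
  exists2 c, 0 < c & forall u, c * `|u^T| ^+ 2 <= ip Q (T *m u) u.
Proof.
move=> hT.
have hP : forall r, r != 0 -> 0 < qf (T^T *m Q) r.
  move=> r r0; have := hT (r^T) (trmx_neq0 r0).
  by rewrite ip_qf !trmxK.
have [c c0 hc] := coercive hP.
exists c => // u; have := hc (u^T).
by rewrite ip_qf /qf !trmxK.
Qed.

Lemma Lplus_bnd Q T : exists2 K, 0 <= K &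
  forall u v, `|ip Q (T *m u) v| <= K * (`|u^T| * `|v^T|).
Proof.
have [K K0 hK] := bil_bound (T^T *m Q).
by exists K => // u v; rewrite ip_qf; exact: hK.
Qed.

Lemma Lplus_ge0 Q T u : Lplus Q T -> 0 <= ip Q (T *m u) u.
Proof.
move=> hT; have [->|u0] := eqVneq u 0; first by rewrite mulmx0 ip0l.
exact/ltW/hT.
Qed.

Lemma qfC1_gt0 Q T u v : Lplus Q T -> (u != 0 \/ v != 0) -> 0 < (qfC Q T u v).1.
Proof.
move=> hT [u0|v0] /=.
  by have := hT u u0; have := Lplus_ge0 v hT; lra.
by have := hT v v0; have := Lplus_ge0 u hT; lra.
Qed.

Lemma W_bound Q S T : Lplus Q S -> Lplus Q T ->
  has_ubound [set absLn z | z in Wset Q S T].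
Proof.
move=> hS hT.
have [cS cS0 hcS] := Lplus_coer hS; have [cT cT0 hcT] := Lplus_coer hT.
have [KS KS0 hKS] := Lplus_bnd Q S; have [KT KT0 hKT] := Lplus_bnd Q T.
exists (2 * (KS + 1) / cT + 2 * (KT + 1) / cS + pi).
move=> _ [z [u [v [nz ->]]] <-].
set N := qfC Q S u v; set D := qfC Q T u v.
have N1 := qfC1_gt0 hS nz; have D1 := qfC1_gt0 hT nz.
rewrite -/N -/D in N1 D1.
set a := `|u^T|; set b := `|v^T|.
have a0 : 0 <= a by exact: normr_ge0.
have b0 : 0 <= b by exact: normr_ge0.
have s0 : 0 < a ^+ 2 + b ^+ 2.
  case: nz => h.
    have : 0 < a by rewrite normr_gt0 trmx_neq0.
    by have := sqr_ge0 b; nra.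
  have : 0 < b by rewrite normr_gt0 trmx_neq0.
  by have := sqr_ge0 a; nra.
have gen : forall P : 'M[R]_n, forall c K, 0 < c -> 0 <= K ->
   (forall w, c * `|w^T| ^+ 2 <= ip Q (P *m w) w) ->
   (forall w1 w2, `|ip Q (P *m w1) w2| <= K * (`|w1^T| * `|w2^T|)) ->
   c * (a ^+ 2 + b ^+ 2) <= cabs (qfC Q P u v) /\
   cabs (qfC Q P u v) <= 2 * (K + 1) * (a ^+ 2 + b ^+ 2).
  move=> P c K c0 K0 hc hK.
  have l1 : c * (a ^+ 2 + b ^+ 2) <= (qfC Q P u v).1.
    by rewrite /= mulrDr; apply: lerD; [exact: hc | exact: hc].
  have l2 : `|(qfC Q P u v).1| <= K * (a ^+ 2 + b ^+ 2).
    rewrite /= !expr2 mulrDr; apply: le_trans (ler_normD _ _) _.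
    by apply: lerD; [exact: hK | exact: hK].
  have l3 : `|(qfC Q P u v).2| <= K * (2 * (a * b)).
    rewrite /=; apply: le_trans (ler_normB _ _) _.
    have e : 2 * (a * b) = b * a + a * b by ring.
    rewrite e mulrDr; apply: lerD; [exact: hK | exact: hK].
  split; first exact: le_trans l1 (cabs_ge1 _).
  apply: le_trans (cabs_le _) _.
  have ab : 2 * (a * b) <= a ^+ 2 + b ^+ 2 by have := sqr_ge0 (a - b); nra.
  have l4 : K * (2 * (a * b)) <= K * (a ^+ 2 + b ^+ 2) by exact: ler_wpM2l.
  nra.
have [NS1 NS2] := gen S cS KS cS0 KS0 hcS hKS.
have [DT1 DT2] := gen T cT KT cT0 KT0 hcT hKT.
rewrite -/N in NS1 NS2; rewrite -/D in DT1 DT2.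
set s := a ^+ 2 + b ^+ 2 in s0 NS1 NS2 DT1 DT2.
have cN0 : 0 < cabs N by apply: lt_le_trans NS1; rewrite mulr_gt0.
have cD0 : 0 < cabs D by apply: lt_le_trans DT1; rewrite mulr_gt0.
have xE := cabs_cdiv N D1.
set x := cabs (cdiv N D) in xE *.
have x0 : 0 < x by rewrite xE divr_gt0.
have xle : x <= 2 * (KS + 1) / cT.
  rewrite xE; apply: div_le => //.
  have := mulr_gt0 cT0 s0; nra.
have xile : x^-1 <= 2 * (KT + 1) / cS.
  rewrite xE invf_div; apply: div_le => //.
  have := mulr_gt0 cS0 s0; nra.
rewrite /absLn /cLn -/x.
apply: le_trans (cabs_le _) _ => /=.
apply: lerD.
  by apply: le_trans (ln_abs_le x0) _; exact: lerD.
exact: carg_bound.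
Qed.

End F.



Section G.
Variable R : realType.

Lemma sup_le_c (E : set R) c : (forall y, E y -> y <= c) -> 0 <= c -> sup E <= c.
Proof.
move=> h c0; have [[y Ey]|ne] := pselect (E !=set0).
  by apply: ge_sup; [exists y | move=> z /h].
have -> : E = set0 by apply/seteqP; split => // z Ez; apply: ne; exists z.
by rewrite sup0.
Qed.

Variable n : nat.
Implicit Types (Q A B S T L G : 'M[R]_n) (x y u v : 'cV[R]_n).

Lemma Linv_plus Q L : Q^T = Q -> Lplus Q L -> L \in unitmx /\ Lplus Q (invmx L).
Proof.
move=> hQ hL.
have Lu : L \in unitmx.
  rewrite unitmxE unitfE -det_tr; apply/negP => /det0P [v v0 hv].
  have h : L *m v^T = 0 by rewrite -(trmxK L) -trmx_mul hv trmx0.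
  by have := hL (v^T) (trmx_neq0 v0); rewrite h ip0l ltxx.
split => // u u0.
set w := invmx L *m u.
have uw : u = L *m w by rewrite /w mulKVmx.
have w0 : w != 0 by apply/eqP => w0; move: u0; rewrite uw w0 mulmx0 eqxx.
by rewrite {1}uw ipC //; apply: hL.
Qed.

Lemma W_sup Q S T z : Lplus Q S -> Lplus Q T -> Wset Q S T z ->
  absLn z <= dsigma Q S T.
Proof.
move=> hS hT hz; apply: sup_upper_bound; last by exists z.
by split; [exists (absLn z), z | exact: W_bound].
Qed.

Lemma dsigma_ge0 Q S T : Lplus Q S -> Lplus Q T -> 0 <= dsigma Q S T.
Proof.
move=> hS hT; case: (pselect (Wset Q S T !=set0)) => [[z hz]|ne].
  by apply: le_trans (W_sup hS hT hz); exact: sqrtr_ge0.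
rewrite /dsigma.
have -> : [set absLn z | z in Wset Q S T] = set0.
  by apply/seteqP; split => // y [z hz e]; apply: ne; exists z.
by rewrite sup0.
Qed.

End G.

Lemma eig_eq (R : realType) n (A : 'M[R]_n) (x y : 'cV[R]_n) (a b : R) :
  (1%:M - A) *m x = a *: x - b *: y ->
  A *m x = (1 - a) *: x - (- b) *: y.
Proof.
rewrite mulmxBl mul1mx => h.
have -> : A *m x = x - (x - A *m x) by rewrite opprB addrC subrK.
by rewrite h scalerBl scale1r scaleNr opprK opprB addrCA addrC.
Qed.

Lemma eig_eq2 (R : realType) n (A : 'M[R]_n) (x y : 'cV[R]_n) (a b : R) :
  (1%:M - A) *m y = b *: x + a *: y ->
  A *m y = (- b) *: x + (1 - a) *: y.
Proof.
rewrite mulmxBl mul1mx => h.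
have -> : A *m y = y - (y - A *m y) by rewrite opprB addrCA subrr addr0.
rewrite h scalerBl scale1r scaleNr opprD.
by rewrite addrCA.
Qed.

Unset Implicit Arguments.
Local Close Scope classical_set_scope.

Theorem lemmaA2 (R : realType) (n : nat) (Q : 'M[R]_n) (delta : R) (L G : 'M[R]_n) :
  is_inner_product Q -> 0 < delta -> Lplus Q L -> Lplus Q G ->
  Num.min (dsigma Q (invmx L) G) (dsigma Q L (invmx G)) <= delta ->
  specrad (1%:M - L *m G) <=
    (expR delta - 1) / delta * Num.min (dsigma Q (invmx L) G) (dsigma Q L (invmx G)).
Proof.
move=> [hQt hQp] d0 hL hG hmin.
have [Lu hLi] := Linv_plus hQt hL.
have [Gu hGi] := Linv_plus hQt hG.
set d1 := dsigma Q (invmx L) G; set d2 := dsigma Q L (invmx G).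
set m := Num.min d1 d2 in hmin *.
have m0 : 0 <= m.
  by rewrite /m le_min; apply/andP; split; [exact: dsigma_ge0 | exact: dsigma_ge0].
have K0 : 0 <= (expR delta - 1) / delta.
  by rewrite divr_ge0 ?(ltW d0) // subr_ge0 -expR0 ler_expR ltW.
apply: sup_le_c; last exact: mulr_ge0.
move=> _ [z [x [y [nz [hx hy]]]] <-].
case: z hx hy => a b /= hx hy.
have ex := eig_eq hx; have ey := eig_eq2 hy.
set X := 1 - a in ex ey *; set Y := - b in ex ey *.
have gx : G *m x = X *: (invmx L *m x) - Y *: (invmx L *m y).
  by rewrite !scalemxAr -mulmxBr -ex -mulmxA mulKmx.
have gy : G *m y = Y *: (invmx L *m x) + X *: (invmx L *m y).
  by rewrite !scalemxAr -mulmxDr -ey -mulmxA mulKmx.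
have rel1 := qfC_rel Q gx gy.
have N1 := qfC1_gt0 hLi nz; have D1 := qfC1_gt0 hG nz.
set N := qfC Q (invmx L) x y in rel1 N1.
rewrite rel1 /= in D1.
have lok := lam_ok N1 D1.
have mne : X ^+ 2 + Y ^+ 2 != 0.
  by rewrite -(cabs_sqr (X, Y)) expf_neq0 // gt_eqF // cabs_pos.
have w1 : Wset Q (invmx L) G (X / (X ^+ 2 + Y ^+ 2), - Y / (X ^+ 2 + Y ^+ 2)).
  exists x, y; split => //; rewrite rel1 -/N.
  by have := cdiv_mulR (X:=X) (Y:=Y) N.2 N1 mne; rewrite -surjective_pairing => ->.
have r1 := W_sup hLi hG w1.
rewrite absLn_inv // -/d1 in r1.
set x' := G *m x; set y' := G *m y.
have lx : L *m x' = X *: (invmx G *m x') - Y *: (invmx G *m y').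
  by rewrite /x' /y' !mulKmx // mulmxA ex.
have ly : L *m y' = Y *: (invmx G *m x') + X *: (invmx G *m y').
  by rewrite /x' /y' !mulKmx // mulmxA ey.
have rel2 := qfC_rel Q lx ly.
have nz' : x' != 0 \/ y' != 0.
  case: nz => h; [left | right]; apply/eqP => h'; move/eqP: h; apply.
    by rewrite -(mulKmx Gu x) -/x' h' mulmx0.
  by rewrite -(mulKmx Gu y) -/y' h' mulmx0.
have N'1 := qfC1_gt0 hGi nz'.
set N' := qfC Q (invmx G) x' y' in rel2 N'1.
have w2 : Wset Q L (invmx G) (X, Y).
  exists x', y'; split => //; rewrite rel2 -/N'.
  by have := cdiv_mulL X Y N'.2 N'1; rewrite -surjective_pairing => ->.
have r2 := W_sup hL hGi w2.
rewrite -/d2 in r2.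
set rho := absLn (X, Y) in r1 r2.
have rm : rho <= m by rewrite /m le_min r1 r2.
have rho0 : 0 <= rho by exact: sqrtr_ge0.
have k := key_est lok.
rewrite -/X -/Y -/rho in k.
apply: le_trans k _.
apply: le_trans (conv_bound rho0 (le_trans rm hmin) d0) _.
have e : rho / delta * (expR delta - 1) = (expR delta - 1) / delta * rho by field; rewrite gt_eqF.
by rewrite e ler_wpM2l.
Qed.
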